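(* Let $\ell\in\mathbb{Z}_{\ge 2}$, let $b_{n,m}=b_{n,m}(\ell)$ be as in the context, and let $R_{\ell-j}(x)$, $2\le j\le\ell$, be the rational functions defined by $R_{\ell-2}(x)=1$, $R_{\ell-3}(x)=x^{-1}$, $R_{\ell-j}(x)=x^{-1}R_{\ell-j+1}(x)-R_{\ell-j+2}(x)$ for $j>3$. Then for $2\le j\le \ell$ we have $R_{\ell-j}(x)=U_{j-2}\big(\tfrac{1}{2x}\big)$, and consequently $$\sum_{\substack{m\ge0,\ m\equiv \ell-j\bmod\ell\\ n\ge \ell-j}} b_{n,m}x^n \;=\; U_{j-2}\big(\tfrac{1}{2x}\big)\sum_{\substack{m\ge0,\ m\equiv \ell-2\bmod\ell\\ n\ge \ell-2}} b_{n,m}x^n .$$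
   Context: $U_j$ denotes the $j$th Chebyshev polynomial of the second kind: $U_0(x)=1$, $U_1(x)=2x$, $U_j(x)=2xU_{j-1}(x)-U_{j-2}(x)$ for $j\ge 2$. For $n,m\in\mathbb{Z}_{\ge 0}$, $a_{n,m}$ is the number of unit step paths $(x_0,\dots,x_n)$ on $\mathbb{Z}_{\ge0}$ (integers $x_i\ge0$, $|x_i-x_{i-1}|=1$) with $x_0=0$, $x_n=m$. For fixed $\ell\in\mathbb{Z}_{\ge2}$, $b_{n,m}=b_{n,m}(\ell)$ is defined by: $b_{n,m}=a_{n,m}$ if $m\equiv-1\pmod\ell$; $b_{n,m}=b_{n-1,m-1}+b_{n-1,m+1}$ if $m\equiv m_0\pmod\ell$ with $0\le m_0<\ell-2$; $b_{n,m}=b_{n-1,m-1}$ if $m\equiv-2\pmod\ell$; the recursion is used for $n\ge1$ with $b_{0,0}=1$, $b_{0,m}=0$ for $m>0$, and $b_{n,-1}=0$. Identities are of formal power series in $x$. *)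

(* Defs.v *)
From HB Require Import structures.
From mathcomp Require Import all_boot all_order all_algebra fraction.
Set Implicit Arguments. Unset Strict Implicit. Unset Printing Implicit Defensive.
Import Order.TTheory GRing.Theory Num.Theory.
Local Open Scope ring_scope.

Fixpoint chebU (R : nzRingType) (n : nat) : {poly R} :=
  match n with
  | 0 => 1
  | (p.+1 as q).+1 => 2%:P * 'X * chebU R q - chebU R p
  | 1 => 2%:P * 'X
  end.

(* a_{n,m}: number of unit-step paths (x_0,...,x_n) on Z_{>=0} with x_0 = 0,
   x_n = m.  A path of length n starting at 0 takes values in {0,...,n}, so
   such paths are exactly the functions 'I_(n+1) -> 'I_(n+1) below. *)
Definition step_ok n (t : {ffun 'I_n.+1 -> 'I_n.+1}) (i : 'I_n) : bool :=
  let u := nat_of_ord (t (widen_ord (leqnSn n) i)) in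
  let v := nat_of_ord (t (lift ord0 i)) in
  (v == u.+1) || (u == v.+1).

Definition apath (n m : nat) : nat :=
  #|[pred t : {ffun 'I_n.+1 -> 'I_n.+1} |
      [&& nat_of_ord (t ord0) == 0%N, nat_of_ord (t ord_max) == m
        & [forall i : 'I_n, step_ok t i]]]|.

(* b_{n,m}(l) as in the paper (with b_{n,-1} = 0). *)
Fixpoint bnm (l n m : nat) {struct n} : nat :=
  match n with
  | 0 => (m == 0)%N : nat
  | n'.+1 =>
      if (m %% l == l - 1)%N then apath n m
      else if (m %% l == l - 2)%N then
        (if m is m'.+1 then bnm l n' m' else 0%N)
      else ((if m is m'.+1 then bnm l n' m' else 0%N) + bnm l n' m.+1)%N
  end.

(* Coefficient of x^n in  sum_{m >= 0, m = r mod l, n >= r} b_{n,m} x^n.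
   Since b_{n,m} = 0 for m > n, the inner sum over m is over m <= n. *)
Definition Fcoef (l r n : nat) : rat :=
  if (r <= n)%N then
    (\sum_(m < n.+1 | (m %% l == r %% l)%N) bnm l n m)%:R
  else 0.

Definition zext (f : nat -> rat) (N : int) : rat :=
  match N with Posz n => f n | Negz _ => 0 end.

(* Coefficient of x^N in  p(x^{-1}) * f(x), where p is a polynomial
   (so p(x^{-1}) is a Laurent polynomial in x^{-1}) and f a formal
   Laurent series given by its coefficients. *)
Definition laurent_mul (p : {poly rat}) (f : int -> rat) (N : int) : rat :=
  \sum_(k < size p) p`_k * f (N + (k : int)).

(* The rational functions R_{l-j}, indexed by k = j - 2:
   Rfun 0 = R_{l-2} = 1, Rfun 1 = R_{l-3} = x^{-1},
   Rfun (k+2) = x^{-1} Rfun (k+1) - Rfun k. *)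
Definition xF : {fraction {poly rat}} := FracField.tofrac ('X : {poly rat}).

Fixpoint Rfun (k : nat) : {fraction {poly rat}} :=
  match k with
  | 0 => 1
  | (p.+1 as q).+1 => xF^-1 * Rfun q - Rfun p
  | 1 => xF^-1
  end.

(* Main.v *)
Require Import Defs.
From HB Require Import structures.
From mathcomp Require Import all_boot all_order all_algebra fraction.
From mathcomp Require Import zify.
Import Order.TTheory GRing.Theory Num.Theory.
Local Open Scope ring_scope.

Lemma two_neq0F : (2%:R : {fraction {poly rat}}) != 0.
Proof.
have -> : (2%:R : {fraction {poly rat}}) = FracField.tofrac (2%:R : {poly rat}).
  by rewrite rmorph_nat.
by rewrite tofrac_eq0 -polyC_natr polyC_eq0.
Qed.

Lemma hornerU (R S : comNzRingType) (f : {rmorphism R -> S}) k a :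
  (map_poly f (chebU R k.+2)).[a] =
  2 * a * (map_poly f (chebU R k.+1)).[a] - (map_poly f (chebU R k)).[a].
Proof.
rewrite (_ : chebU _ k.+2 = 2%:P * 'X * chebU _ k.+1 - chebU _ k) //.
by rewrite rmorphB rmorphM rmorphM /= map_polyX map_polyC /= !hornerE rmorph_nat.
Qed.

Lemma hornerU1 (R S : comNzRingType) (f : {rmorphism R -> S}) a :
  (map_poly f (chebU R 1)).[a] = 2 * a.
Proof.
rewrite (_ : chebU _ 1 = 2%:P * 'X) //.
by rewrite rmorphM /= map_polyX map_polyC /= !hornerE rmorph_nat.
Qed.

Lemma part1 k :
  Rfun k = (map_poly (@FracField.tofrac _) (chebU _ k)).[(2%:R * xF)^-1].
Proof.
have h2 : 2%:R * (2%:R * xF)^-1 = xF^-1.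
  by rewrite invfM mulrA divff ?mul1r // two_neq0F.
suff : Rfun k = (map_poly (@FracField.tofrac _) (chebU _ k)).[(2%:R * xF)^-1] /\
       Rfun k.+1 = (map_poly (@FracField.tofrac _) (chebU _ k.+1)).[(2%:R * xF)^-1] by case.
elim: k => [|k [IH1 IH2]].
  split; first by rewrite /= rmorph1 hornerE.
  by rewrite hornerU1 h2.
split => //.
rewrite (_ : Rfun k.+2 = xF^-1 * Rfun k.+1 - Rfun k) // IH1 IH2.
by rewrite hornerU h2.
Qed.

Lemma modS_eq (l s i : nat) : (0 < s)%N -> (s < l)%N ->
  ((i.+1 %% l == s) = (i %% l == s.-1))%N.
Proof. move=> h1 h2.
have l0 : (0 < l)%N by lia.
have e1 := div.divn_eq i l. have e2 := div.divn_eq i.+1 l.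
have r1 := ltn_pmod i l0. have r2 := ltn_pmod i.+1 l0.
move: (i %/ l)%N (i.+1 %/ l)%N (i %% l)%N (i.+1 %% l)%N e1 e2 r1 r2 => q1 q2 a b e1 e2 r1 r2.
have : (q2 = q1 \/ q2 = q1.+1)%N by nia.
case=> H; subst q2; apply/eqP/eqP; nia.
Qed.

Lemma zext_succ (f : nat -> rat) N : zext f (N + 1) =
  match N with Posz n => f n.+1 | Negz 0 => f 0%N | Negz k.+1 => 0 end.
Proof. case: N => [n|[|k]] /=; first by rewrite addn1. by []. by []. Qed.

Lemma bnm_gt l n m : (n < m)%N -> bnm l n m = 0%N.
Proof.
elim: n m => [|n IH] m hm /=; first by case: m hm.
case: ifP => _.
  rewrite /apath; apply: eq_card0 => t; rewrite !inE.
  have /negbTE -> : (nat_of_ord (t ord_max) != m) by rewrite neq_ltn (leq_trans (ltn_ord _) hm).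
  by rewrite andbF.
by case: ifP => _; case: m hm => // m hm; rewrite !IH //; lia.
Qed.

Definition Gc l r n B := (\sum_(m < B) (if (m %% l == r)%N then bnm l n m else 0))%N.

Lemma Gc_ext l r n B : (n < B)%N -> Gc l r n B = Gc l r n n.+1.
Proof.
elim: B => // B IH hB.
case: (ltngtP n B) => [h||h]; last by rewrite h.
- by rewrite /Gc big_ord_recr /= -/(Gc l r n B) IH // bnm_gt // if_same addn0.
- lia.
Qed.

Lemma Gc_small l r n : (n < r)%N -> Gc l r n n.+1 = 0%N.
Proof.
move=> h; apply: big1 => i _.
have /negbTE -> // : (i %% l != r)%N.
have := leq_mod i l; have := ltn_ord i; lia.
Qed.

Lemma FcoefE l r n : (r < l)%N -> Fcoef l r n = (Gc l r n n.+1)%:R.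
Proof.
move=> hr; rewrite /Fcoef modn_small // big_mkcond /=.
by case: ifP => // /negbT; rewrite -ltnNge => /Gc_small ->.
Qed.

Lemma shiftS l s B (F : nat -> nat) : (0 < s)%N -> (s < l)%N ->
  (\sum_(m < B.+1) (if (m %% l == s)%N then F m else 0) =
   \sum_(i < B) (if (i %% l == s.-1)%N then F i.+1 else 0))%N.
Proof.
move=> h1 h2; rewrite big_ord_recl /= mod0n.
have /negbTE -> : (0 != s)%N by lia.
by rewrite add0n; apply: eq_bigr => i _; rewrite /bump /= add1n modS_eq.
Qed.

Lemma G_rec l r n : (2 <= l)%N -> (0 < r)%N -> (r.+2 < l)%N ->
  Gc l r n.+1 n.+2 = (Gc l r.-1 n n.+1 + Gc l r.+1 n n.+1)%N.
Proof.
move=> hl h1 h2.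
rewrite -(@Gc_ext l r.+1 n n.+3) // /Gc.
have hr1 : (r.+1 < l)%N by lia.
have hr : (r < l)%N by lia.
rewrite (@shiftS l r.+1 n.+2 (bnm l n) isT hr1).
rewrite (@shiftS l r n.+1 (fun i => bnm l n i.+1) h1 hr).
rewrite (@shiftS l r n.+1 (bnm l n.+1) h1 hr).
rewrite -big_split /=; apply: eq_bigr => i _.
case: ifP => // /eqP hi.
rewrite /=.
have /negbTE -> : (i.+1 %% l != l - 1)%N by rewrite modS_eq; [apply/eqP; lia| |]; lia.
have /negbTE -> : (i.+1 %% l != l - 2)%N by rewrite modS_eq; [apply/eqP; lia| |]; lia.
by []. lia.
Qed.

Lemma G_base l n : (3 <= l)%N ->
  Gc l (l - 2)%N n.+1 n.+2 = Gc l (l - 3)%N n n.+1.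
Proof.
move=> hl.
rewrite /Gc shiftS; [|lia|lia].
apply: eq_bigr => i _.
rewrite (_ : ((l - 2).-1 = l - 3)%N); last lia.
case: ifP => // /eqP hi.
rewrite /=.
have /negbTE -> : (i.+1 %% l != l - 1)%N by rewrite modS_eq; [apply/eqP; lia| |]; lia.
have -> : (i.+1 %% l == l - 2)%N by rewrite modS_eq; [apply/eqP; lia| |]; lia.
by [].
Qed.

Definition zF l r := zext (Fcoef l r).

Lemma RecZ l r N : (2 <= l)%N -> (0 < r)%N -> (r.+2 < l)%N ->
  zF l r.-1 N = zF l r (N + 1) - zF l r.+1 N.
Proof.
move=> hl h1 h2; rewrite /zF zext_succ.
case: N => [n|[|k]] /=.
- rewrite !FcoefE; try lia.
  by rewrite G_rec // natrD addrK.
- by rewrite /Fcoef; case: r h1 h2 => // r; rewrite subrr.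
- by rewrite subrr.
Qed.

Lemma BaseZ l N : (3 <= l)%N ->
  zF l (l - 3)%N N = zF l (l - 2)%N (N + 1).
Proof.
move=> hl; rewrite /zF zext_succ.
case: N => [n|[|k]] //=.
- by rewrite !FcoefE; try lia; rewrite G_base.
- by rewrite /Fcoef; case: ifP => //; lia.
Qed.

Lemma Lwiden (p : {poly rat}) f N n : (size p <= n)%N ->
  laurent_mul p f N = \sum_(k < n) p`_k * f (N + (k : int)).
Proof.
move=> h; rewrite /laurent_mul.
rewrite -(subnKC h); elim: (n - size p)%N => [|d IH]; first by rewrite addn0.
by rewrite addnS big_ord_recr /= -IH nth_default ?mul0r ?addr0 // leq_addr.
Qed.

Lemma L1 f N : laurent_mul 1 f N = f N.
Proof. by rewrite /laurent_mul size_poly1 big_ord1 coef1 mul1r addr0. Qed.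

Lemma L0 f N : laurent_mul 0 f N = 0.
Proof. by rewrite /laurent_mul size_poly0 big_ord0. Qed.

Lemma LXMB (p q : {poly rat}) f N :
  laurent_mul ('X * p - q) f N = laurent_mul p f (N + 1) - laurent_mul q f N.
Proof.
set n := (size p + size q)%N.
have hs : (size ('X * p - q)%R <= n.+1)%N.
  apply: leq_trans (size_polyD _ _) _; rewrite size_polyN geq_max.
  have := @size_polyMleq _ 'X p; rewrite size_polyX; rewrite (_ : 2%R = 2%N) // => H; apply/andP; split; rewrite ?add2n /= in H *; rewrite /n. exact: (leq_trans H (leq_addr _ _)). exact: leq_trans (leq_addl (size p) (size q)) (leqnSn _).
rewrite (@Lwiden _ _ _ _ hs) (@Lwiden p _ _ n) ?leq_addr // (@Lwiden q _ _ n.+1); last exact: leq_trans (leq_addl (size p) (size q)) (leqnSn _).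
rewrite (eq_bigr (fun k : 'I_n.+1 => ('X * p)`_k * f (N + (k : int)) - q`_k * f (N + (k : int)))); last by move=> k _; rewrite coefB mulrBl.
rewrite sumrB; congr (_ - _).
rewrite big_ord_recl coefXM /= mul0r add0r.
apply: eq_bigr => k _; rewrite coefXM /=.
by rewrite /bump /= add1n -addrA (addrC 1) -PoszD addn1.
Qed.

Definition Pk k : {poly rat} := chebU rat k \Po ((2%:R)^-1 *: 'X).

Lemma Pk0 : Pk 0 = 1.
Proof. by rewrite /Pk /= -polyC1 comp_polyC. Qed.

Lemma hXX : (2%:P : {poly rat}) * ((2%:R)^-1 *: 'X) = 'X.
Proof. by rewrite -mul_polyC mulrA -polyCM divff // mul1r. Qed.

Lemma Pk1 : Pk 1 = 'X.
Proof. by rewrite /Pk /= comp_polyM comp_polyC comp_polyX hXX. Qed.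

Lemma PkS k : Pk k.+2 = 'X * Pk k.+1 - Pk k.
Proof.
rewrite /Pk (_ : chebU _ k.+2 = 2%:P * 'X * chebU _ k.+1 - chebU _ k) //.
by rewrite comp_polyB !comp_polyM comp_polyC comp_polyX hXX.
Qed.

Lemma mainL l k : (2 <= l)%N ->
  ((k <= l - 2)%N -> forall N, zF l (l - 2 - k)%N N = laurent_mul (Pk k) (zF l (l - 2)%N) N) /\
  ((k.+1 <= l - 2)%N -> forall N, zF l (l - 2 - k.+1)%N N = laurent_mul (Pk k.+1) (zF l (l - 2)%N) N).
Proof.
move=> hl; elim: k => [|k [IH1 IH2]].
  split=> [_ N|h N]; first by rewrite subn0 Pk0 L1.
  rewrite (_ : (l - 2 - 1 = l - 3)%N); last lia.
  rewrite BaseZ; last lia.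
  by rewrite Pk1 -[X in laurent_mul X]mulr1 -[X in laurent_mul X]subr0 LXMB L1 L0 subr0.
split=> // h N.
rewrite PkS LXMB.
have h1 : (0 < l - 3 - k)%N by lia.
have h2 : ((l - 3 - k).+2 < l)%N by lia.
have := @RecZ l _ N hl h1 h2.
rewrite (_ : ((l - 3 - k).-1 = l - 2 - k.+2)%N); last lia.
move=> ->.
rewrite (_ : ((l - 3 - k).+1 = l - 2 - k)%N); last lia.
rewrite (_ : ((l - 3 - k) = l - 2 - k.+1)%N); last lia.
rewrite IH1 ?IH2 //; lia.
Qed.

Theorem lemma2p9 (l j : nat) (hl : (2 <= l)%N) (hj2 : (2 <= j)%N) (hjl : (j <= l)%N) :
  Rfun (j - 2) = (map_poly (@FracField.tofrac _) (chebU _ (j - 2))).[(2%:R * xF)^-1]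
  /\
  (forall N : int,
     zext (Fcoef l (l - j)) N =
     laurent_mul (chebU rat (j - 2) \Po ((2%:R)^-1 *: 'X)) (zext (Fcoef l (l - 2))) N).
Proof.
split; first exact: part1.
move=> N.
have [H _] := @mainL l (j - 2) hl.
have := H ltac:(lia) N.
rewrite /zF /Pk (_ : (l - 2 - (j - 2) = l - j)%N) //; lia.
Qed.
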